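(* Let $\hat{\mathfrak{so}}$ be the extended Schr\''odinger-Virasoro algebra over $\mathbb{C}$ and, for $g\in\frac12\mathbb{Z}$, let $\Delta_g(\hat{\mathfrak{so}})$ be the space of $\frac12$-derivations of $\hat{\mathfrak{so}}$ of degree $g$. Then $\Delta_0(\hat{\mathfrak{so}})=\langle \mathrm{Id}\rangle$ (the scalar multiples of the identity map) and $\Delta_j(\hat{\mathfrak{so}})=0$ for every $j\in\mathbb{Z}\setminus\{0\}$.
   Context: The extended Schr\''odinger-Virasoro algebra $\hat{\mathfrak{so}}$ is the complex Lie algebra with basis $\{L_n,M_n,N_n,Y_{n+\frac12},C_L,C_{LN},C_N\mid n\in\mathbb{Z}\}$ and brackets (all others zero, $C_L,C_{LN},C_N$ central): $[L_m,L_n]=(n-m)L_{m+n}+\delta_{m+n,0}\frac{m^3-m}{12}C_L$, $[L_m,M_n]=nM_{m+n}$, $[L_m,N_n]=nN_{m+n}+\delta_{m+n,0}(m^2-m)C_{LN}$, $[N_m,M_n]=2M_{m+n}$, $[L_m,Y_{n+\frac12}]=(n+\frac{1-m}{2})Y_{m+n+\frac12}$, $[N_m,Y_{n+\frac12}]=Y_{m+n+\frac12}$, $[Y_{m+\frac12},Y_{n+\frac12}]=(m-n)M_{m+n+1}$, $[N_m,N_n]=n\delta_{m+n,0}C_N$, for all $m,n\in\mathbb{Z}$. It is $\frac12\mathbb{Z}$-graded by $\hat{\mathfrak{so}}_0=\langle L_0,M_0,N_0,C_L,C_{LN},C_N\rangle$, $\hat{\mathfrak{so}}_n=\langle L_n,M_n,N_n\rangle$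 for $n\in\mathbb{Z}\setminus\{0\}$, $\hat{\mathfrak{so}}_{n+\frac12}=\langle Y_{n+\frac12}\rangle$. A $\frac12$-derivation of a Lie algebra $L$ is a linear map $\varphi:L\to L$ with $\varphi([x,y])=\frac12([\varphi(x),y]+[x,\varphi(y)])$ for all $x,y$. A $\frac12$-derivation $\varphi$ has degree $g$ if $\varphi(\hat{\mathfrak{so}}_h)\subseteq\hat{\mathfrak{so}}_{g+h}$ for all $h\in\frac12\mathbb{Z}$. *)

(* Defs.v *)
From HB Require Import structures.
From mathcomp Require Import all_boot all_order all_algebra.
From mathcomp Require Import finmap.
From mathcomp.multinomials Require Import monalg.
From mathcomp.real_closed Require Export complex.
From mathcomp Require Export reals.

Set Implicit Arguments.
Unset Strict Implicit.
Unset Printing Implicit Defensive.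

Import Order.TTheory GRing.Theory Num.Theory.
Local Open Scope ring_scope.

(* Basis of the extended Schroedinger-Virasoro algebra.
   [Y n] stands for Y_{n+1/2}. *)
Inductive sv_basis : Type :=
  | bL of int | bM of int | bN of int | bY of int
  | bCL | bCLN | bCN.

Definition sv_code (b : sv_basis) : nat * int :=
  match b with
  | bL n => (0%N, n) | bM n => (1%N, n) | bN n => (2%N, n) | bY n => (3%N, n)
  | bCL => (4%N, 0) | bCLN => (5%N, 0) | bCN => (6%N, 0)
  end.

Definition sv_decode (p : nat * int) : option sv_basis :=
  match p with
  | (0%N, n) => Some (bL n) | (1%N, n) => Some (bM n)
  | (2%N, n) => Some (bN n) | (3%N, n) => Some (bY n)
  | (4%N, _) => Some bCL | (5%N, _) => Some bCLN | (6%N, _) => Some bCN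
  | _ => None
  end.

Lemma sv_codeK : pcancel sv_code sv_decode.
Proof. by case. Qed.

HB.instance Definition _ := Countable.copy sv_basis (pcan_type sv_codeK).

Definition sv (K : fieldType) := {malg K[sv_basis]}.

Section SV.
Variable K : fieldType.

Local Notation e b := (<< b >> : sv K).
Local Notation "c *e b" := (c *: (<< b >> : sv K)) (at level 40).

Definition dlt (a b : int) : K := (a == b)%:R.

Definition sv_br_basis (a b : sv_basis) : sv K :=
  match a, b with
  | bL m, bL n => (n - m)%:~R *e bL (m + n)
                   + (dlt (m + n) 0 * ((m ^+ 3 - m)%:~R / 12%:R)) *e bCL
  | bL m, bM n => n%:~R *e bM (m + n)
  | bM n, bL m => - (n%:~R *e bM (m + n))
  | bL m, bN n => n%:~R *e bN (m + n) + (dlt (m + n) 0 * (m ^+ 2 - m)%:~R) *e bCLN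
  | bN n, bL m => - (n%:~R *e bN (m + n) + (dlt (m + n) 0 * (m ^+ 2 - m)%:~R) *e bCLN)
  | bN m, bM n => 2%:R *e bM (m + n)
  | bM n, bN m => - (2%:R *e bM (m + n))
  | bL m, bY n => (n%:~R + (1 - m)%:~R / 2%:R) *e bY (m + n)
  | bY n, bL m => - ((n%:~R + (1 - m)%:~R / 2%:R) *e bY (m + n))
  | bN m, bY n => e (bY (m + n))
  | bY n, bN m => - e (bY (m + n))
  | bY m, bY n => (m - n)%:~R *e bM (m + n + 1)
  | bN m, bN n => (n%:~R * dlt (m + n) 0) *e bCN
  | _, _ => 0
  end.

Definition sv_br (x y : sv K) : sv K :=
  \sum_(a <- msupp x) \sum_(b <- msupp y) (x@_a * y@_b) *: sv_br_basis a b.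

(* twice the degree of a basis element (the grading is by 1/2 Z) *)
Definition deg2 (b : sv_basis) : int :=
  match b with
  | bL n | bM n | bN n => 2 * n
  | bY n => 2 * n + 1
  | _ => 0
  end.

(* x lies in the homogeneous component so_{h/2} *)
Definition homog2 (h : int) (x : sv K) : bool :=
  all (fun b => deg2 b == h) (msupp x).

Definition half_derivation (phi : {linear sv K -> sv K}) : Prop :=
  forall x y : sv K,
    phi (sv_br x y) = 2%:R^-1 *: (sv_br (phi x) y + sv_br x (phi y)).

(* phi has degree g2/2 *)
Definition has_degree2 (g2 : int) (phi : {linear sv K -> sv K}) : Prop :=
  forall (h : int) (x : sv K), homog2 h x -> homog2 (g2 + h) (phi x).

End SV.

(* Main.v *)
Require Import Defs.
From HB Require Import structures.
From mathcomp Require Import all_boot all_order all_algebra.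
From mathcomp Require Import finmap.
From mathcomp.multinomials Require Import monalg.
From mathcomp.real_closed Require Import complex.
From mathcomp Require Import reals.
From mathcomp Require Import zify ring lra.
Set Implicit Arguments.
Unset Strict Implicit.
Unset Printing Implicit Defensive.
Import GRing.Theory Num.Theory.
Local Open Scope ring_scope.
Local Open Scope complex_scope.
Section Gen.
Variable K : numFieldType.
Local Notation E b := (<< b >> : sv K).
Implicit Types x y : sv K.

Lemma sv_brEw x y (d1 d2 : {fset sv_basis}) : (msupp x `<=` d1)%fset -> (msupp y `<=` d2)%fset ->
  sv_br x y = \sum_(a <- d1) \sum_(b <- d2) (x@_a * y@_b) *: sv_br_basis K a b.
Proof.
move=> h1 h2; rewrite /sv_br.
rewrite (big_fset_incl _ h1); last first.
  by move=> a _ /mcoeff_outdom ->; rewrite big1 // => b _; rewrite mul0r scale0r.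
apply: eq_bigr => a _; apply: big_fset_incl h2 _ => b _ /mcoeff_outdom ->.
by rewrite mulr0 scale0r.
Qed.

Lemma sv_brDl x x' y : sv_br (x + x') y = sv_br x y + sv_br x' y.
Proof.
pose d : {fset sv_basis} := (msupp x `|` msupp x')%fset.
rewrite !(@sv_brEw _ _ d (msupp y)) ?fsubset_refl ?fsubsetUl ?fsubsetUr ?msuppD_le //.
rewrite -big_split; apply: eq_bigr => a _; rewrite -big_split; apply: eq_bigr => b _.
by rewrite mcoeffD mulrDl scalerDl.
Qed.

Lemma sv_brDr x y y' : sv_br x (y + y') = sv_br x y + sv_br x y'.
Proof.
pose d : {fset sv_basis} := (msupp y `|` msupp y')%fset.
rewrite !(@sv_brEw _ _ (msupp x) d) ?fsubset_refl ?fsubsetUl ?fsubsetUr ?msuppD_le //.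
rewrite -big_split; apply: eq_bigr => a _; rewrite -big_split; apply: eq_bigr => b _.
by rewrite mcoeffD mulrDr scalerDl.
Qed.

Lemma sv_brZl c x y : sv_br (c *: x) y = c *: sv_br x y.
Proof.
rewrite !(@sv_brEw _ _ (msupp x) (msupp y)) ?fsubset_refl ?msuppZ_le //.
rewrite scaler_sumr; apply: eq_bigr => a _; rewrite scaler_sumr; apply: eq_bigr => b _.
by rewrite mcoeffZ -mulrA scalerA.
Qed.

Lemma sv_brZr c x y : sv_br x (c *: y) = c *: sv_br x y.
Proof.
rewrite !(@sv_brEw _ _ (msupp x) (msupp y)) ?fsubset_refl ?msuppZ_le //.
rewrite scaler_sumr; apply: eq_bigr => a _; rewrite scaler_sumr; apply: eq_bigr => b _.
by rewrite mcoeffZ mulrCA scalerA.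
Qed.

Lemma sv_br0l y : sv_br 0 y = 0.
Proof. by have := sv_brZl 0 0 y; rewrite !scale0r. Qed.
Lemma sv_br0r x : sv_br x 0 = 0.
Proof. by have := sv_brZr 0 x 0; rewrite !scale0r. Qed.
Lemma sv_brNl x y : sv_br (- x) y = - sv_br x y.
Proof. by rewrite -scaleN1r sv_brZl scaleN1r. Qed.
Lemma sv_brNr x y : sv_br x (- y) = - sv_br x y.
Proof. by rewrite -scaleN1r sv_brZr scaleN1r. Qed.

Lemma malgUZ (c : K) b : << c *g b >> = c *: E b.
Proof.
apply/malgP => k; rewrite mcoeffZ !mcoeffU.
by case: (b == k); rewrite ?mulr1 ?mulr0.
Qed.

Lemma msuppE1 b : msupp (E b) = [fset b]%fset.
Proof. by rewrite msuppU oner_eq0. Qed.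

Lemma sv_brE1 a b : sv_br (E a) (E b) = sv_br_basis K a b.
Proof.
by rewrite /sv_br !msuppE1 !big_seq_fset1 !mcoeffUU mulr1 scale1r.
Qed.

Lemma malgE1 x : x = \sum_(k <- msupp x) x@_k *: E k.
Proof. by rewrite {1}[x]monalgE; apply: eq_bigr => k _; rewrite malgUZ. Qed.

Lemma lin_ext (phi psi : {linear sv K -> sv K}) :
  (forall b, phi (E b) = psi (E b)) -> forall x, phi x = psi x.
Proof.
move=> h x; rewrite (malgE1 x) !linear_sum; apply: eq_bigr => k _.
by rewrite !linearZ h.
Qed.

End Gen.
Section Gen2.
Variable K : numFieldType.
Local Notation E b := (<< b >> : sv K).
Implicit Types x y : sv K.

Lemma eqbE (a b : sv_basis) : (a == b) = (sv_code a == sv_code b).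
Proof. by apply/eqP/eqP => [->//|h]; exact: (pcan_inj sv_codeK h). Qed.

Lemma homogE1 b : homog2 (deg2 b) (E b).
Proof. by apply/allP => k; rewrite msuppE1 inE => /eqP ->. Qed.

Lemma homog_mem h y k : homog2 h y -> k \in msupp y -> deg2 k = h.
Proof. by move/allP => H /H /eqP. Qed.

Lemma two_neq0 : (2%:R : K) != 0.
Proof. by rewrite pnatr_eq0. Qed.

Lemma adL0E b : sv_br (E (bL 0)) (E b) = ((deg2 b)%:~R / 2%:R) *: E b.
Proof.
rewrite sv_brE1; case: b => [n|n|n|n||| ] /=;
  rewrite ?add0r ?subr0 ?expr0n /= ?subrr ?mul0r ?mulr0 ?scale0r ?addr0 ?mulr0 ?scale0r ?addr0 //;
  by congr (_ *: _); rewrite ?(intrM, intrD, intrB); field.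
Qed.
End Gen2.
Section Gen3.
Variable K : numFieldType.
Local Notation E b := (<< b >> : sv K).
Implicit Types x y : sv K.

Lemma sv_br_sumr I (r : seq I) (P : pred I) (F : I -> sv K) x :
  sv_br x (\sum_(i <- r | P i) F i) = \sum_(i <- r | P i) sv_br x (F i).
Proof. by elim/big_rec2: _ => [|i a b _ <-]; rewrite ?sv_br0r ?sv_brDr. Qed.

Lemma sv_br_suml I (r : seq I) (P : pred I) (F : I -> sv K) y :
  sv_br (\sum_(i <- r | P i) F i) y = \sum_(i <- r | P i) sv_br (F i) y.
Proof. by elim/big_rec2: _ => [|i a b _ <-]; rewrite ?sv_br0l ?sv_brDl. Qed.

Lemma adL0H k y : homog2 k y -> sv_br (E (bL 0)) y = (k%:~R / 2%:R) *: y.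
Proof.
move=> hy; rewrite [in LHS](malgE1 y) [in RHS](malgE1 y) sv_br_sumr scaler_sumr.
apply: eq_big_seq => b hb; rewrite sv_brZr adL0E (homog_mem hy hb) !scalerA.
by rewrite mulrC.
Qed.

Lemma eqA (phi : {linear sv K -> sv K}) g2 : half_derivation phi -> has_degree2 g2 phi ->
  forall b, (deg2 b - g2)%:~R *: phi (E b) = 2%:R *: sv_br (phi (E (bL 0))) (E b).
Proof.
move=> hd hg b; have := hd (E (bL 0)) (E b); rewrite adL0E linearZ /=.
have hb := hg _ _ (homogE1 K b); rewrite (adL0H hb).
set v := phi (E b); set w := sv_br _ (E b) => h.
have -> : w = 2%:R *: (((deg2 b)%:~R / 2%:R) *: v) - (((g2 + deg2 b)%:~R) / 2%:R) *: v.
  by rewrite h scalerA mulfV ?two_neq0 // scale1r addrK.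
rewrite scalerBr !scalerA -scalerBl; congr (_ *: _).
by rewrite ?(intrD, intrB); field.
Qed.

End Gen3.
Section Gen4.
Variable K : numFieldType.
Local Notation E b := (<< b >> : sv K).
Implicit Types x y : sv K.

Lemma coefU_ind y b k : y@_b * (E b)@_k = (b == k)%:R * y@_k.
Proof. by rewrite mcoeffU; case: eqP => [->|]; rewrite ?mulr1 ?mul1r ?mulr0 ?mul0r. Qed.

Lemma dec3 j y : j != 0 -> homog2 (2 * j) y ->
  y = y@_(bL j) *: E (bL j) + y@_(bM j) *: E (bM j) + y@_(bN j) *: E (bN j).
Proof.
move=> j0 hy; apply/malgP => k; rewrite !mcoeffD !mcoeffZ !coefU_ind -!mulrDl.
have [hk|hk] := boolP (k \in msupp y); last by rewrite (mcoeff_outdom hk) mulr0.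
have := homog_mem hy hk; case: k hk => [n|n|n|n|||] _ /= hn.
all: try (exfalso; lia).
all: have -> : n = j by lia.
all: by rewrite eqxx ?addr0 ?add0r mul1r.
Qed.

Lemma dec6 y : homog2 0 y ->
  y = y@_(bL 0) *: E (bL 0) + y@_(bM 0) *: E (bM 0) + y@_(bN 0) *: E (bN 0)
    + y@_bCL *: E bCL + y@_bCLN *: E bCLN + y@_bCN *: E bCN.
Proof.
move=> hy; apply/malgP => k; rewrite !mcoeffD !mcoeffZ !coefU_ind -!mulrDl.
have [hk|hk] := boolP (k \in msupp y); last by rewrite (mcoeff_outdom hk) mulr0.
have := homog_mem hy hk; case: k hk => [n|n|n|n|||] _ /= hn.
all: try (exfalso; lia).
all: try have -> : n = 0 by lia.
all: by rewrite ?eqxx ?addr0 ?add0r mul1r.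
Qed.

End Gen4.
Section Gen5.
Variable K : numFieldType.
Local Notation E b := (<< b >> : sv K).
Implicit Types x y : sv K.

Lemma intr_neq0 (j : int) : j != 0 -> (j%:~R : K) != 0.
Proof. by rewrite intr_eq0. Qed.

Lemma scal0 (k : K) (v : sv K) : k != 0 -> k *: v = 0 -> v = 0.
Proof. by move=> k0 /eqP; rewrite scaler_eq0 (negbTE k0) => /eqP. Qed.

Lemma all0 (phi : {linear sv K -> sv K}) : (forall b, phi (E b) = 0) -> forall x, phi x = 0.
Proof.
move=> h x; rewrite (malgE1 x) linear_sum big1 // => k _.
by rewrite linearZ /= h scaler0.
Qed.

Lemma nonzero_case j (phi : {linear sv K -> sv K}) : j != 0 ->
  half_derivation phi -> has_degree2 (2 * j) phi -> forall x, phi x = 0.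
Proof.
move=> j0 hd hg.
have hA := eqA hd hg.
set u := phi (E (bL 0)) in hA.
have hu : homog2 (2 * j) u.
  by have := hg _ _ (homogE1 K (bL 0)); rewrite /= mulr0 addr0.
have hdec := dec3 j0 hu.
set a := u@_(bL j) in hdec; set b := u@_(bM j) in hdec; set c := u@_(bN j) in hdec.
have h1 := hA (bL j); rewrite /= subrr scale0r in h1.
move/esym: h1 => /(scal0 (two_neq0 K)).
rewrite hdec !sv_brDl !sv_brZl !sv_brE1 /= => h1.
have hb : b = 0.
  have := congr1 (mcoeff (bM (j + j))) h1.
  rewrite !(mcoeffD, mcoeffN, mcoeffZ, mcoeffU, mcoeff0) /= eqxx.
  rewrite /= mulr1n !(mulr0, addr0, add0r, mulr1, oppr0) => /eqP; rewrite mulf_eq0 oppr_eq0.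
  by rewrite (negbTE (intr_neq0 j0)) orbF => /eqP.
have hc : c = 0.
  have := congr1 (mcoeff (bN (j + j))) h1.
  rewrite !(mcoeffD, mcoeffN, mcoeffZ, mcoeffU, mcoeff0) /= eqxx.
  rewrite /= mulr1n !(mulr0, addr0, add0r, mulr1, oppr0) => /eqP; rewrite mulf_eq0 oppr_eq0.
  by rewrite (negbTE (intr_neq0 j0)) orbF => /eqP.
rewrite hb hc !scale0r !addr0 in hdec.
have dj : dlt K j 0 = 0 by rewrite /dlt (negbTE j0).
have hN0 : phi (E (bN 0)) = 0.
  have := hA (bN 0); rewrite hdec sv_brZl sv_brE1 /= addr0 dj mul0r !scale0r addr0.
  rewrite scaler0 => h; rewrite scaler0 in h; apply: (scal0 _ h); apply: intr_neq0; lia.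
have hv : phi (E (bM (- j))) = (a / 2%:R) *: E (bM 0).
  have := hA (bM (- j)); rewrite hdec sv_brZl sv_brE1 /= addrN !scalerA.
  move=> h; apply: (scalerI (a := ((2 * - j - 2 * j)%:~R : K))).
    apply: intr_neq0; lia.
  rewrite h scalerA; congr (_ *: _).
  by rewrite !(intrD, intrM, intrN); field.
have := hd (E (bN 0)) (E (bM (- j))).
rewrite sv_brE1 /= linearZ /= add0r hN0 sv_br0l add0r hv sv_brZr sv_brE1 /= add0r.
rewrite !scalerA => h2.
have ha : a = 0.
  have := congr1 (mcoeff (bM 0)) h2.
  rewrite !(mcoeffD, mcoeffN, mcoeffZ, mcoeffU, mcoeff0) /= => h.
  have : a = (2%:R * (a / 2%:R) * 1 - 2%:R^-1 * (a / 2%:R * 2%:R) * 1) * 2%:R by field.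
  by rewrite h subrr mul0r.
rewrite ha scale0r in hdec.
have hz : forall b, deg2 b != 2 * j -> phi (E b) = 0.
  move=> b' hb'; have := hA b'; rewrite hdec sv_br0l scaler0.
  by apply: scal0; apply: intr_neq0; rewrite subr_eq0.
have e : 2 * j + - j = j by lia.
have hz2 : phi (E (bL (2 * j))) = 0 by apply: hz => /=; lia.
have hz3 : forall X, (X = bL (- j) \/ X = bM (- j) \/ X = bN (- j)) -> phi (E X) = 0.
  by move=> X [->|[->|->]]; apply: hz => /=; lia.
apply: all0 => bb; case: bb => [n|n|n|n|||]; try (by apply: hz => /=; lia);
  (have [->|nj] := eqVneq n j; last by apply: hz => /=; lia).
- have := hd (E (bL (2 * j))) (E (bL (- j))).
  rewrite hz2 (hz3 (bL (- j))); last by left.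
  rewrite sv_br0l sv_br0r addr0 scaler0 sv_brE1 /= e dj mul0r scale0r addr0 linearZ /=.
  by apply: scal0; apply: intr_neq0; lia.
- have := hd (E (bL (2 * j))) (E (bM (- j))).
  rewrite hz2 (hz3 (bM (- j))); last by right; left.
  rewrite sv_br0l sv_br0r addr0 scaler0 sv_brE1 /= e linearZ /=.
  by apply: scal0; apply: intr_neq0; lia.
- have := hd (E (bL (2 * j))) (E (bN (- j))).
  rewrite hz2 (hz3 (bN (- j))); last by right; right.
  rewrite sv_br0l sv_br0r addr0 scaler0 sv_brE1 /= e dj mul0r scale0r addr0 linearZ /=.
  by apply: scal0; apply: intr_neq0; lia.
Qed.

End Gen5.
Section Gen6.
Variable K : numFieldType.
Local Notation E b := (<< b >> : sv K).
Implicit Types x y : sv K.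

Lemma allc (phi : {linear sv K -> sv K}) (a : K) :
  (forall b, phi (E b) = a *: E b) -> forall x, phi x = a *: x.
Proof.
move=> h x; rewrite (malgE1 x) linear_sum scaler_sumr; apply: eq_bigr => k _.
by rewrite linearZ /= h !scalerA mulrC.
Qed.

Lemma scal_case (phi : {linear sv K -> sv K}) (c : K) :
  (forall x, phi x = c *: x) -> half_derivation phi /\ has_degree2 0 phi.
Proof.
move=> hphi; split.
  move=> x y; rewrite !hphi sv_brZl sv_brZr scalerDr !scalerA -scalerDl.
  by congr (_ *: _); field.
move=> h x hx; rewrite hphi add0r; apply/allP => k hk; apply: (allP hx).
exact: (fsubsetP (msuppZ_le c x)).
Qed.

Lemma zero_case (phi : {linear sv K -> sv K}) :
  half_derivation phi -> has_degree2 0 phi -> exists c, forall x, phi x = c *: x.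
Proof.
move=> hd hg.
have hA := eqA hd hg.
set u := phi (E (bL 0)) in hA.
have hu : homog2 0 u.
  by have := hg _ _ (homogE1 K (bL 0)); rewrite /= mulr0 addr0.
have hdec := dec6 hu.
set a := u@_(bL 0) in hdec; set b := u@_(bM 0) in hdec; set c := u@_(bN 0) in hdec.
set d := u@_bCL in hdec; set e := u@_bCLN in hdec; set f := u@_bCN in hdec.
have h1 := hA (bN 0); rewrite /= mulr0 subr0 scale0r in h1.
move/esym: h1 => /(scal0 (two_neq0 K)).
rewrite hdec !sv_brDl !sv_brZl !sv_brE1 /= => h1.
have hb : b = 0.
  have := congr1 (mcoeff (bM 0)) h1.
  rewrite !(mcoeffD, mcoeffN, mcoeffZ, mcoeffU, mcoeff0) /=.
  rewrite !(mulr0, mul0r, addr0, add0r, mulr1) => /eqP.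
  by rewrite mulf_eq0 oppr_eq0 (negbTE (two_neq0 K)) orbF => /eqP.
have h2 := hA (bM 0); rewrite /= mulr0 subr0 scale0r in h2.
move/esym: h2 => /(scal0 (two_neq0 K)).
rewrite hdec !sv_brDl !sv_brZl !sv_brE1 /= => h2.
have hc : c = 0.
  have := congr1 (mcoeff (bM 0)) h2.
  rewrite !(mcoeffD, mcoeffN, mcoeffZ, mcoeffU, mcoeff0) /=.
  rewrite !(mulr0z, mulr0, mul0r, addr0, add0r, mulr1) => /eqP.
  by rewrite mulf_eq0 (negbTE (two_neq0 K)) orbF => /eqP.
rewrite hb hc !scale0r !addr0 in hdec.
have hnz : forall bb, deg2 bb != 0 -> phi (E bb) = a *: E bb.
  move=> bb hbb; have := hA bb.
  rewrite hdec !sv_brDl !sv_brZl adL0E !sv_brE1 /= !scaler0 !addr0.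
  move=> h.
  apply: (scalerI (a := ((deg2 bb)%:~R : K))); first exact: intr_neq0.
  by rewrite h !scalerA; congr (_ *: _); field.
have hbr : forall (p q : sv_basis), deg2 p != 0 -> deg2 q != 0 ->
    phi (sv_br (E p) (E q)) = a *: sv_br (E p) (E q).
  move=> p q hp hq; rewrite hd (hnz p hp) (hnz q hq) sv_brZl sv_brZr.
  by rewrite scalerDr !scalerA -scalerDl; congr (_ *: _); field.
have d00 : dlt K 0 0 = 1 by rewrite /dlt eqxx.
have hL0 : phi (E (bL 0)) = a *: E (bL 0).
  have := hbr (bL (-1)) (bL 1) isT isT; rewrite sv_brE1 /=.
  rewrite (_ : (-1 + 1 : int) = 0) //.
  rewrite d00 mulr0z mul0r mulr0 scale0r !addr0 linearZ /= scalerA mulrC -scalerA.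
  by move=> h; apply: (scalerI _ h); apply: intr_neq0.
have hN0 : phi (E (bN 0)) = a *: E (bN 0).
  have := hbr (bL 1) (bN (-1)) isT isT; rewrite sv_brE1 /=.
  rewrite (_ : (1 + -1 : int) = 0) //.
  rewrite d00 mulr0z mulr0 scale0r !addr0 linearZ /= scalerA mulrC -scalerA.
  by move=> h; apply: (scalerI _ h); apply: intr_neq0.
exists a; apply: allc => bb; case: bb => [n|n|n|n|||]; try (by apply: hnz => /=; lia);
  try (have [->|nj] := eqVneq n 0; last by apply: hnz => /=; lia).
- exact: hL0.
- have := hbr (bL (-1)) (bM 1) isT isT; rewrite sv_brE1 /=.
  rewrite (_ : (-1 + 1 : int) = 0) // linearZ /= scalerA mulrC -scalerA.
  by move=> h; apply: (scalerI _ h); apply: intr_neq0.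
- exact: hN0.
- have := hbr (bL 2) (bL (-2)) isT isT; rewrite sv_brE1 /=.
  rewrite (_ : (2 + -2 : int) = 0) // (_ : (2 ^+ 3 - 2 : int) = 6) //.
  rewrite d00 mul1r linearD !linearZ /= hL0 scalerDr !scalerA (mulrC a) => /addrI.
  rewrite (mulrC a) -[in RHS]scalerA => h; apply: (scalerI _ h).
  by rewrite mulf_neq0 ?invr_neq0 ?intr_eq0 ?pnatr_eq0.
- have := hbr (bL 2) (bN (-2)) isT isT; rewrite sv_brE1 /=.
  rewrite (_ : (2 + -2 : int) = 0) // (_ : (2 ^+ 2 - 2 : int) = 2) //.
  rewrite d00 mul1r linearD !linearZ /= hN0 scalerDr !scalerA (mulrC a) => /addrI.
  rewrite (mulrC a) -[in RHS]scalerA => h; apply: (scalerI _ h).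
  by rewrite intr_eq0.
- have := hbr (bN (-1)) (bN 1) isT isT; rewrite sv_brE1 /=.
  rewrite (_ : (-1 + 1 : int) = 0) // d00 mulr1 linearZ /= scalerA mulrC -scalerA.
  by move=> h; apply: (scalerI _ h); apply: intr_neq0.
Qed.
End Gen6.

Theorem mainTheorem1 (R : realType) :
  (* Delta_0 = <Id> *)
  (forall phi : {linear sv R[i] -> sv R[i]},
     (half_derivation phi /\ has_degree2 0 phi) <->
     (exists c : R[i], forall x, phi x = c *: x))
  /\
  (* Delta_j = 0 for j in Z \ {0} *)
  (forall (j : int), j != 0 ->
     forall phi : {linear sv R[i] -> sv R[i]},
       half_derivation phi -> has_degree2 (2 * j) phi -> forall x, phi x = 0).
Proof.
split.
- move=> phi; split.
  + by case=> hd hg; exact: zero_case hd hg.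
  + by case=> c hc; exact: scal_case hc.
- by move=> j j0 phi hd hg; exact: nonzero_case j0 hd hg.
Qed.
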